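(* There exist positive integers $m_0,t,L,q_0$, depending only on $k$, such that for every $(m_0,t,L,q_0)$-pseudo-random weight $\nu=(\nu_N)$ there is a function $N\mapsto\varepsilon(N)\ge0$ on primes with $\varepsilon(N)\to0$, such that for every prime $N$ and every $f:\mathbb{Z}_N\to\mathbb{R}$ with $|f(x)|\le1+\nu_N(x)$ for all $x$, one has $\max_{x\in\mathbb{Z}_N}|\mathcal Df(x)|\le2^{2^k-1}+\varepsilon(N)$.
   Context: Let $k\ge 2$ be a fixed integer. For a prime $N$, $\mathbb{Z}_N=\mathbb{Z}/N\mathbb{Z}$. For a finite set $A$ and $g:A\to\mathbb{R}$, $\mathbb{E}(g\mid A)=\frac{1}{|A|}\sum_{a\in A}g(a)$. For $\boldsymbol\omega\in\{0,1\}^k$ and $\mathbf t\in\mathbb{Z}_N^k$, $\boldsymbol\omega\cdot\mathbf t=\sum_i\omega_it_i$; $\mathbf 0=(0,\dots,0)$. The dual function of $f$ is $\mathcal Df(x)=\mathbb{E}\bigl(\prod_{\boldsymbol\omega\in\{0,1\}^k,\ \boldsymbol\omega\ne\mathbf 0}f(x+\boldsymbol\omega\cdot\mathbf t)\mid\mathbf t\in\mathbb{Z}_N^k\bigr)$. Let $m_0,t,L,q_0$ be positive integers. An $(m_0,t,L,q_0)$-pseudo-random weight is a family $\nu=(\nu_N)_{N\text{ prime}}$ of functions $\nu_N:\mathbb{Z}_N\to[0,\infty)$ satisfying: (Linear forms condition) $\sup\bigl|\mathbb{E}\bigl(\prod_{i=1}^m\nu_N(\psi_i(\mathbf{x}))\mid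 \mathbf{x}\in\mathbb{Z}_N^t\bigr)-1\bigr|\to 0$ as $N\to\infty$, where the supremum is over all $m\le m_0$ and all maps $\psi_1,\dots,\psi_m:\mathbb{Z}_N^t\to\mathbb{Z}_N$ of the form $\psi_i(\mathbf{x})=b_i+\sum_{j=1}^tL_{i,j}x_j$ with $b_i\in\mathbb{Z}$ arbitrary, $L_{i,j}\in\mathbb{Z}$, $|L_{i,j}|\le L$, each vector $(L_{i,j})_{1\le j\le t}\in\mathbb{Z}^t$ nonzero, and no two of these vectors collinear; (Correlation condition) there exist functions $\tau_N:\mathbb{Z}_N\to[0,\infty)$ with $\sup_N\mathbb{E}(\tau_N^p\mid\mathbb{Z}_N)<\infty$ for every integer $p\ge1$, such that for every prime $N$, every integer $q$ with $2\le q\le q_0$ and all $h_1,\dots,h_q\in\mathbb{Z}_N$ (not necessarily distinct), $\mathbb{E}\bigl(\nu_N(x+h_1)\cdots\nu_N(x+h_q)\mid x\in\mathbb{Z}_N\bigr)\le\sum_{1\le i<j\le q}\tau_N(h_i-h_j)$. *)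

(* Defs.v *)
From HB Require Import structures.
From mathcomp Require Import all_boot all_order all_algebra.
From mathcomp Require Import Rstruct.
From Stdlib Require Rdefinitions.
Set Implicit Arguments. Unset Strict Implicit. Unset Printing Implicit Defensive.
Import Order.TTheory GRing.Theory Num.Theory.
Local Open Scope ring_scope.

Notation R := Rdefinitions.R.

Definition avg (T : finType) (g : T -> R) : R :=
  (\sum_(a : T) g a) / (#|T|%:R).

Definition lin_form (N t : nat) (b : int) (Lrow : 'I_t -> int)
    (x : {ffun 'I_t -> 'Z_N}) : 'Z_N :=
  b%:~R + \sum_(j < t) (Lrow j)%:~R * x j.

Definition collinear (t : nat) (u v : 'I_t -> int) : Prop :=
  exists a b : int, (a != 0 \/ b != 0) /\ forall j, a * u j = b * v j.

(* Linear forms condition, with "sup |...| -> 0 as N -> oo" unfolded *)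
Definition linear_forms_cond (m0 t L : nat) (nu : forall N : nat, 'Z_N -> R)
  : Prop :=
  forall e : R, 0 < e -> exists N0 : nat, forall N : nat, prime N ->
    (N0 <= N)%N ->
    forall (m : nat), (m <= m0)%N ->
    forall (b : 'I_m -> int) (Lc : 'I_m -> 'I_t -> int),
      (forall i j, `|Lc i j| <= L%:Z) ->
      (forall i, exists j, Lc i j != 0) ->
      (forall i i', i != i' -> ~ collinear (Lc i) (Lc i')) ->
      `| avg (fun x : {ffun 'I_t -> 'Z_N} =>
                \prod_(i < m) nu N (lin_form (b i) (Lc i) x)) - 1 | <= e.

Definition correlation_cond (q0 : nat) (nu : forall N : nat, 'Z_N -> R)
  : Prop :=
  exists tau : forall N : nat, 'Z_N -> R,
    (forall N, prime N -> forall x, 0 <= tau N x) /\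
    (forall p : nat, (1 <= p)%N -> exists C : R,
        forall N, prime N -> avg (fun x : 'Z_N => tau N x ^+ p) <= C) /\
    (forall N, prime N -> forall q : nat, (2 <= q <= q0)%N ->
       forall h : 'I_q -> 'Z_N,
         avg (fun x : 'Z_N => \prod_(i < q) nu N (x + h i))
         <= \sum_(i < q) \sum_(j < q | (i < j)%N) tau N (h i - h j)).

(* (m0,t,L,q0)-pseudo-random weight; only the values at primes N matter *)
Definition pseudo_random_weight (m0 t L q0 : nat)
    (nu : forall N : nat, 'Z_N -> R) : Prop :=
  [/\ (forall N, prime N -> forall x, 0 <= nu N x),
      linear_forms_cond m0 t L nu & correlation_cond q0 nu].

Definition dual (k N : nat) (f : 'Z_N -> R) (x : 'Z_N) : R :=
  avg (fun tt : {ffun 'I_k -> 'Z_N} =>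
    \prod_(w : {ffun 'I_k -> bool} | w != [ffun => false])
       f (x + \sum_(i < k | w i) tt i)).

(* Main.v *)
Require Import Defs.
From HB Require Import structures.
From mathcomp Require Import all_boot all_order all_algebra.
From mathcomp Require Import Rstruct.
From mathcomp Require Import lra zify.
Import Order.TTheory GRing.Theory Num.Theory.
Set Implicit Arguments. Unset Strict Implicit. Unset Printing Implicit Defensive.
Local Open Scope ring_scope.

Lemma avg_norm (T : finType) (g : T -> R) : `|avg g| <= avg (fun a => `|g a|).
Proof.
rewrite /avg normrM normfV normr_nat.
apply: ler_wpM2r; first by rewrite invr_ge0 ler0n.
exact: ler_norm_sum.
Qed.

Lemma avg_le (T : finType) (g1 g2 : T -> R) :
  (forall a, g1 a <= g2 a) -> avg g1 <= avg g2.
Proof.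
move=> H; rewrite /avg; apply: ler_wpM2r; first by rewrite invr_ge0 ler0n.
by apply: ler_sum => a _.
Qed.

Lemma avg_sum (T I : finType) (P : pred I) (g : I -> T -> R) :
  avg (fun a => \sum_(i | P i) g i a) = \sum_(i | P i) avg (g i).
Proof. by rewrite /avg exchange_big mulr_suml. Qed.

Lemma avg0 (T : finType) : avg (fun _ : T => 0) = 0.
Proof. by rewrite /avg big1 ?mul0r. Qed.

Definition bmax (T : finType) (F : T -> R) : R := \big[Num.max/0]_(a : T) F a.

Lemma bmax_ge (T : finType) (F : T -> R) a : F a <= bmax F.
Proof. by rewrite /bmax (bigD1 a) //= le_max lexx. Qed.

Lemma bmax_le (T : finType) (F : T -> R) c :
  0 <= c -> (forall a, F a <= c) -> bmax F <= c.
Proof.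
move=> c0 H; rewrite /bmax; apply: (big_ind (fun y => y <= c)) => //.
by move=> y z hy hz; rewrite ge_max hy hz.
Qed.

Lemma bmax_ge0 (T : finType) (F : T -> R) : 0 <= bmax F.
Proof.
rewrite /bmax; elim/big_rec: _ => // i y _ hy.
by rewrite le_max hy orbT.
Qed.

Definition P0 k : {set {ffun 'I_k -> bool}} := [set~ [ffun => false]].

Definition EJ k (nu : forall N : nat, 'Z_N -> R) N (x : 'Z_N)
  (J : {set {ffun 'I_k -> bool}}) : R :=
  avg (fun tt : {ffun 'I_k -> 'Z_N} =>
         \prod_(w in J) nu N (x + \sum_(i < k | w i) tt i)).

Lemma sum_const_sub k (c : R) :
  \sum_(J : {set {ffun 'I_k -> bool}} | J \subset P0 k) c = c * 2 ^+ (2 ^ k - 1).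
Proof.
rewrite (eq_bigl (fun J => J \in powerset (P0 k))); last by move=> J; rewrite powersetE.
rewrite sumr_const card_powerset cardsC1 card_ffun card_bool card_ord.
by rewrite -[LHS]mulr_natr natrX subn1.
Qed.

Lemma noncol k (u v : {ffun 'I_k -> bool}) :
  u != v -> u != [ffun => false] -> v != [ffun => false] ->
  ~ collinear (fun j => (u j : nat)%:Z) (fun j => (v j : nat)%:Z).
Proof.
move=> huv hu hv [a [b [hab H]]].
have [ju hju] : exists j, u j.
  case: (pickP (fun j => u j)) => [j hj | h]; first by exists j.
  by case/eqP: hu; apply/ffunP => j; rewrite ffunE h.
have [jv hjv] : exists j, v j.
  case: (pickP (fun j => v j)) => [j hj | h]; first by exists j.
  by case/eqP: hv; apply/ffunP => j; rewrite ffunE h.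
have [j hj] : exists j, u j != v j.
  case: (pickP (fun j => u j != v j)) => [j hj | h]; first by exists j.
  by case/eqP: huv; apply/ffunP => j; move: (h j); case: (u j); case: (v j).
move: (H j) (H ju) (H jv) hab; rewrite hju hjv.
by move: hj; case: (u j); case: (v j) => //= _; case: (u jv); case: (v ju) => /=; lia.
Qed.

Lemma dual_bound k (nu : forall N : nat, 'Z_N -> R) N (f : 'Z_N -> R) x :
  (forall y, 0 <= nu N y) -> (forall y, `|f y| <= 1 + nu N y) ->
  `|dual k f x| <= 2 ^+ (2 ^ k - 1) +
     \sum_(J : {set {ffun 'I_k -> bool}} | J \subset P0 k) `|EJ nu x J - 1|.
Proof.
move=> hnu hf; rewrite /dual.
set a := fun (tt : {ffun 'I_k -> 'Z_N}) (w : {ffun 'I_k -> bool}) =>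
  nu N (x + \sum_(i < k | w i) tt i).
apply: le_trans (avg_norm _) _.
apply: le_trans (avg_le (g2 := fun tt => \prod_(w | w != [ffun => false]) (1 + a tt w)) _) _.
  move=> tt; rewrite normr_prod; apply: ler_prod => w _; rewrite normr_ge0; exact: hf.
have Hexp : forall tt, \prod_(w | w != [ffun => false]) (1 + a tt w) =
   \sum_(J : {set {ffun 'I_k -> bool}})
      \prod_(w in J) (if w != [ffun => false] then a tt w else 0).
  move=> tt; rewrite big_mkcond /=.
  rewrite (eq_bigr (fun w => (if w != [ffun => false] then a tt w else 0) + 1)); last first.
    by move=> w _; case: ifP => _; [rewrite addrC | rewrite add0r].
  rewrite bigA_distr; apply: eq_bigr => J _; by rewrite [RHS]big_mkcond.
have -> : avg (fun tt => \prod_(w | w != [ffun => false]) (1 + a tt w)) =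
   avg (fun tt => \sum_(J : {set {ffun 'I_k -> bool}})
      \prod_(w in J) (if w != [ffun => false] then a tt w else 0)).
  by rewrite /avg; congr (_ * _); apply: eq_bigr => tt _; exact: Hexp.
rewrite avg_sum [X in X <= _](bigID (fun J : {set {ffun 'I_k -> bool}} => J \subset P0 k)) /=.
rewrite [X in _ + X <= _]big1 ?addr0; last first.
  move=> J hJ; rewrite /avg big1 ?mul0r // => tt _.
  case/subsetPn: hJ => w wJ; rewrite in_setC1 negbK => /eqP wz.
  by rewrite (bigD1 w) //= wz eqxx mul0r.
apply: (@le_trans _ _ (\sum_(J : {set {ffun 'I_k -> bool}} | J \subset P0 k)
   (1 + `|EJ nu x J - 1|))).
  apply: ler_sum => J hJ.
  have -> : avg (fun tt => \prod_(w in J) (if w != [ffun => false] then a tt w else 0))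
     = EJ nu x J.
    rewrite /avg /EJ /avg; congr (_ * _); apply: eq_bigr => tt _.
    apply: eq_bigr => w wJ; have := subsetP hJ w wJ; rewrite in_setC1 => ->.
    by [].
  have := ler_norm (EJ nu x J - 1); lra.
by rewrite big_split /= sum_const_sub mul1r.
Qed.

Lemma EJ_lf k (nu : forall N : nat, 'Z_N -> R) N (x : 'Z_N)
  (J : {set {ffun 'I_k -> bool}}) :
  avg (fun tt : {ffun 'I_k -> 'Z_N} =>
     \prod_(i < #|J|) nu N (lin_form ((x : nat)%:Z)
        (fun j => ((enum_val i : {ffun 'I_k -> bool}) j : nat)%:Z) tt))
  = EJ nu x J.
Proof.
rewrite /EJ /avg; congr (_ * _); apply: eq_bigr => tt _.
rewrite [RHS](big_enum_val); apply: eq_bigr => i _; congr (nu N _).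
rewrite /lin_form -[in RHS](natr_Zp x); congr (_ + _).
rewrite [RHS]big_mkcond; apply: eq_bigr => j _.
by case: (enum_val i j) => /=; rewrite ?mul1r ?mul0r.
Qed.

Theorem lemma4p2 (k : nat) (hk : (2 <= k)%N) :
  exists m0 t L q0 : nat,
    [/\ (0 < m0)%N, (0 < t)%N, (0 < L)%N & (0 < q0)%N] /\
    forall nu : forall N : nat, 'Z_N -> R,
      pseudo_random_weight m0 t L q0 nu ->
      exists eps : nat -> R,
        (forall N, prime N -> 0 <= eps N) /\
        (forall e : R, 0 < e -> exists N0 : nat,
            forall N, prime N -> (N0 <= N)%N -> eps N <= e) /\
        (forall N : nat, prime N -> forall f : 'Z_N -> R,
           (forall x, `|f x| <= 1 + nu N x) ->
           forall x, `|dual k f x| <= 2 ^+ (2 ^ k - 1)%N + eps N).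
Proof.
exists #|{ffun 'I_k -> bool}|, k, 1%N, 1%N; split.
  split => //; last by apply: leq_trans hk.
  by apply/card_gt0P; exists [ffun => false].
move=> nu [hnu hLF _].
exists (fun N => bmax (fun x : 'Z_N =>
  \sum_(J : {set {ffun 'I_k -> bool}} | J \subset P0 k) `|EJ nu x J - 1|)).
split; first by move=> N _; exact: bmax_ge0.
split; last first.
  move=> N hN f hf x; apply: le_trans (@dual_bound k nu N f x (hnu N hN) hf) _.
  by rewrite lerD2l; apply: (bmax_ge (fun x : 'Z_N => \sum_(J : {set {ffun 'I_k -> bool}} | J \subset P0 k) `|EJ nu x J - 1|)).
move=> e he.
have c0 : 0 < (2 : R) ^+ (2 ^ k - 1) by rewrite exprn_gt0.
have he' : 0 < e / 2 ^+ (2 ^ k - 1) by rewrite divr_gt0.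
have [N0 HN0] := hLF _ he'.
exists N0 => N hN hNN0.
apply: bmax_le; first exact: ltW.
move=> x.
apply: (@le_trans _ _ (\sum_(J : {set {ffun 'I_k -> bool}} | J \subset P0 k) (e / 2 ^+ (2 ^ k - 1)))); last first.
  by rewrite sum_const_sub divfK // gt_eqF.
apply: ler_sum => J hJ.
rewrite -EJ_lf.
apply: HN0 => //.
- exact: max_card.
- by move=> i j; case: (enum_val i j).
- move=> i.
  have := subsetP hJ _ (enum_valP i); rewrite in_setC1 => hw.
  case: (pickP (fun j => (enum_val i : {ffun 'I_k -> bool}) j)) => [j hj | h].
    by exists j; rewrite hj.
  by case/eqP: hw; apply/ffunP => j; rewrite ffunE h.
- move=> i i' hii'.
  have := subsetP hJ _ (enum_valP i); rewrite in_setC1 => hw.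
  have := subsetP hJ _ (enum_valP i'); rewrite in_setC1 => hw'.
  apply: noncol => //.
  by apply: contra hii' => /eqP /enum_val_inj ->.
Qed.
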